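(* Let $r\in\mathbb{N}$ and let $H=\begin{bmatrix}A&B\\C&D\end{bmatrix}$ with $A,B,C,D\in\mathbb{R}^{r\times r}$, where $A$ and $D$ are upper-triangular with diagonal entries $a_1,\dots,a_r$ and $d_1,\dots,d_r$ respectively, and $B$ and $C$ are diagonal with diagonal entries $b_1,\dots,b_r$ and $c_1,\dots,c_r$ respectively. If for every $i\in\{1,\dots,r\}$ the $2\times2$ matrix $\begin{bmatrix}a_i&b_i\\c_i&d_i\end{bmatrix}$ is stable, then $H$ is stable.
   Context: A square matrix is stable if all its eigenvalues have modulus strictly less than $1$. *)

(* Defs.v *)
From HB Require Import structures.
From mathcomp Require Import all_boot all_order all_algebra.
From mathcomp Require Import reals.
From mathcomp Require Export complex.
Set Implicit Arguments. Unset Strict Implicit. Unset Printing Implicit Defensive.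
Import Order.TTheory GRing.Theory Num.Theory.
Local Open Scope ring_scope.
Local Open Scope complex_scope.

Definition stable (R : realType) (n : nat) (M : 'M[R]_n) : Prop :=
  forall z : R[i], eigenvalue (map_mx (fun x : R => x%:C) M) z -> `|z| < 1.

Definition mx2 (R : realType) (a b c d : R) : 'M[R]_2 :=
  \matrix_(i < 2, j < 2)
    if i == 0 :> nat then (if j == 0 :> nat then a else b)
    else (if j == 0 :> nat then c else d).

(* Main.v *)
Require Import Defs.
From HB Require Import structures.
From mathcomp Require Import all_boot all_order all_algebra.
From mathcomp Require Import reals complex.
Import Order.TTheory GRing.Theory Num.Theory.
Local Open Scope ring_scope.

Lemma row_triu (K : comNzRingType) n (x : 'rV[K]_n) (M : 'M[K]_n) (j : 'I_n) :
  (forall i : 'I_n, (i < j)%N -> x 0 i = 0) ->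
  (forall i j : 'I_n, (j < i)%N -> M i j = 0) ->
  (x *m M) 0 j = x 0 j * M j j.
Proof.
move=> hx hM; rewrite mxE (bigD1 j) //= big1 ?addr0 // => i /negPf hij.
case: (ltngtP i j) => h.
- by rewrite hx // mul0r.
- by rewrite hM // mulr0.
- by move/val_inj: h => h; rewrite h eqxx in hij.
Qed.

Lemma row_diag (K : comNzRingType) n (x : 'rV[K]_n) (M : 'M[K]_n) (j : 'I_n) :
  (forall i j : 'I_n, i != j -> M i j = 0) ->
  (x *m M) 0 j = x 0 j * M j j.
Proof.
move=> hM; rewrite mxE (bigD1 j) //= big1 ?addr0 // => i hij.
by rewrite hM // mulr0.
Qed.

Arguments row_triu {K n x M j}.
Arguments row_diag {K n} x {M} j.

Theorem lemma5 (R : realType) (r : nat) (A B C D : 'M[R]_r) :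
  (forall i j : 'I_r, (j < i)%N -> A i j = 0) ->
  (forall i j : 'I_r, (j < i)%N -> D i j = 0) ->
  (forall i j : 'I_r, i != j -> B i j = 0) ->
  (forall i j : 'I_r, i != j -> C i j = 0) ->
  (forall i : 'I_r, stable (mx2 (A i i) (B i i) (C i i) (D i i))) ->
  stable (block_mx A B C D).
Proof.
move=> hA hD hB hC hst z /eigenvalueP [v hv vn0].
set f := (fun x : R => (x%:C)%C) in hv *.
case: (boolP (`|z| < 1)) => // zge.
exfalso; move: hv vn0.
rewrite map_block_mx -[v]hsubmxK mul_row_block scale_row_mx.
set x := lsubmx v; set y := rsubmx v.
move=> /eq_row_mx [e1 e2] vn0; clearbody x y.
have hAf : forall i j : 'I_r, (j < i)%N -> (A ^ f)%sesqui i j = 0.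
  by move=> i k h; rewrite mxE hA.
have hDf : forall i j : 'I_r, (j < i)%N -> (D ^ f)%sesqui i j = 0.
  by move=> i k h; rewrite mxE hD.
have hBf : forall i j : 'I_r, i != j -> (B ^ f)%sesqui i j = 0.
  by move=> i k h; rewrite mxE hB.
have hCf : forall i j : 'I_r, i != j -> (C ^ f)%sesqui i j = 0.
  by move=> i k h; rewrite mxE hC.
have step : forall j : 'I_r, (forall i : 'I_r, (i < j)%N -> x 0 i = 0 /\ y 0 i = 0) ->
    x 0 j = 0 /\ y 0 j = 0.
  move=> j hi.
  have hx : forall i : 'I_r, (i < j)%N -> x 0 i = 0 by move=> i /hi [].
  have hy : forall i : 'I_r, (i < j)%N -> y 0 i = 0 by move=> i /hi [].
  have ex := congr1 (fun M : 'rV[R[i]]_r => M 0 j) e1.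
  have ey := congr1 (fun M : 'rV[R[i]]_r => M 0 j) e2.
  rewrite /= [LHS]mxE (row_triu hx hAf) (row_diag _ _ hCf) in ex.
  rewrite /= [LHS]mxE (row_diag _ _ hBf) (row_triu hy hDf) in ey.
  rewrite !mxE in ex ey.
  set w : 'rV[R[i]]_2 := \row_k (if k == 0 :> nat then x 0 j else y 0 j).
  have : w *m (mx2 (A j j) (B j j) (C j j) (D j j) ^ f)%sesqui = z *: w.
    apply/rowP => k; rewrite !mxE !big_ord_recl big_ord0 !mxE /=.
    case: k => [[|[|k]] hk] //=; rewrite addr0.
      by rewrite ex.
    by rewrite ey.
  move=> hw.
  case: (boolP (w == 0)) => [/eqP w0|wn0].
    split.
      by move: (congr1 (fun M : 'rV[R[i]]_2 => M 0 0) w0); rewrite !mxE.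
    by move: (congr1 (fun M : 'rV[R[i]]_2 => M 0 1) w0); rewrite !mxE.
  have := hst j z; rewrite /stable.
  move=> h; exfalso; move: zge; rewrite h //.
  by apply/eigenvalueP; exists w.
have key : forall k (j : 'I_r), (j <= k)%N -> x 0 j = 0 /\ y 0 j = 0.
  elim=> [|k IH] j hj; apply: step => i hi.
    by move: (leq_trans hi hj).
  by apply: IH; rewrite -ltnS (leq_trans hi hj).
have x0 : x = 0 by apply/rowP => j; rewrite mxE; exact: (key j j (leqnn _)).1.
have y0 : y = 0 by apply/rowP => j; rewrite mxE; exact: (key j j (leqnn _)).2.
by rewrite x0 y0 row_mx0 eqxx in vn0.
Qed.
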